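(* Let $r$ be an integer. For every choice of $\gamma_{2i}\in\mathbb{K}$, $i=0,1,2,\dots$, there is a unique choice of $\gamma_{2i+1}\in\mathbb{K}$, $i=0,1,2,\dots$, such that $\varphi(x)=\sum_{i\ge0}\gamma_ix^i\in\mathcal{F}_r$.
   Context: $\mathbb{K}\in\{\mathbb{Q},\mathbb{R},\mathbb{C}\}$. For $r\in\mathbb{Z}$, $\mathcal{F}_r$ denotes the space of $\varphi\in\mathbb{K}[[x]]$ with $\varphi(x/(x-1))=(1-x)^r\varphi(x)$. *)

(* Defs.v *)
(* Formal power series over K are represented by their
   coefficient sequences  nat -> K. *)
From HB Require Import structures.
From mathcomp Require Import all_boot all_order all_algebra.
Set Implicit Arguments. Unset Strict Implicit. Unset Printing Implicit Defensive.
Import Order.TTheory GRing.Theory Num.Theory.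
Local Open Scope ring_scope.

Section FPS.
Variable K : numFieldType.

Definition fps_mul (a b : nat -> K) : nat -> K :=
  fun n => \sum_(i < n.+1) a i * b (n - i)%N.

Definition fps_one : nat -> K := fun n => if n == 0%N then 1 else 0.

Definition fps_X : nat -> K := fun n => if n == 1%N then 1 else 0.

Definition fps_exp (a : nat -> K) (j : nat) : nat -> K :=
  iter j (fps_mul a) fps_one.

Definition fps_1mX : nat -> K :=
  fun n => if n == 0%N then 1 else if n == 1%N then -1 else 0.

(* the series 1/(1-x) = sum_n x^n, the multiplicative inverse of 1 - x *)
Definition fps_geom : nat -> K := fun _ => 1.

(* (1-x)^r for r an integer: (1-x)^k for r = k >= 0,
   (1/(1-x))^(k+1) for r = Negz k = -(k+1) *)
Definition fps_powz (r : int) : nat -> K :=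
  match r with
  | Posz k => fps_exp fps_1mX k
  | Negz k => fps_exp fps_geom k.+1
  end.

(* the series x/(x-1) = x * (-(1/(1-x))) *)
Definition fps_x_over_xm1 : nat -> K :=
  fps_mul fps_X (fun n => - fps_geom n).

(* composition a(g(x)) for a series g with zero constant term;
   since g^j has order >= j, only j <= n contributes to the n-th coefficient *)
Definition fps_comp (a g : nat -> K) : nat -> K :=
  fun n => \sum_(j < n.+1) a j * fps_exp g j n.

(* the space F_r : phi(x/(x-1)) = (1-x)^r phi(x) *)
Definition inF (r : int) (phi : nat -> K) : Prop :=
  forall n, fps_comp phi fps_x_over_xm1 n = fps_mul (fps_powz r) phi n.

(* the series with even coefficients gamma_{2i} = ev i and
   odd coefficients gamma_{2i+1} = od i *)
Definition interleave (ev od : nat -> K) : nat -> K :=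
  fun n => if odd n then od n./2 else ev n./2.

End FPS.

(* Main.v *)
Require Import Defs.
From mathcomp Require Import all_boot all_order all_algebra.
From mathcomp Require Import ring zify.
Set Implicit Arguments. Unset Strict Implicit. Unset Printing Implicit Defensive.
Import Order.TTheory GRing.Theory Num.Theory.
Local Open Scope ring_scope.

Section Work.
Variable K : numFieldType.
Implicit Types (a b c d p s t : {poly K}).

Definition rep N (f : nat -> K) (p : {poly K}) := forall n, (n < N)%N -> f n = p`_n.
Definition eqm N a b := exists s, a = b + s * 'X^N.

Lemma eqm_refl N a : eqm N a a.
Proof. by exists 0; rewrite mul0r addr0. Qed.
Lemma eqm_sym N a b : eqm N a b -> eqm N b a.
Proof. by move=> [s ->]; exists (-s); ring. Qed.
Lemma eqm_trans N a b c : eqm N a b -> eqm N b c -> eqm N a c.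
Proof. by move=> [s ->] [s' ->]; exists (s + s'); ring. Qed.
Lemma eqmD N a b c d : eqm N a b -> eqm N c d -> eqm N (a + c) (b + d).
Proof. by move=> [s ->] [s' ->]; exists (s + s'); ring. Qed.
Lemma eqmN N a b : eqm N a b -> eqm N (- a) (- b).
Proof. by move=> [s ->]; exists (- s); ring. Qed.
Lemma eqmB N a b c d : eqm N a b -> eqm N c d -> eqm N (a - c) (b - d).
Proof. by move=> h1 h2; apply: eqmD => //; apply: eqmN. Qed.
Lemma eqmM N a b c d : eqm N a b -> eqm N c d -> eqm N (a * c) (b * d).
Proof. by move=> [s ->] [s' ->]; exists (s * d + b * s' + s * s' * 'X^N); ring. Qed.
Lemma eqmZ N (k : K) a b : eqm N a b -> eqm N (k *: a) (k *: b).
Proof. by move=> [s ->]; exists (k *: s); rewrite scalerDr scalerAl. Qed.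
Lemma eqmX N a b k : eqm N a b -> eqm N (a ^+ k) (b ^+ k).
Proof.
move=> h; elim: k => [|k IH]; first by rewrite !expr0; apply: eqm_refl.
by rewrite !exprS; apply: eqmM.
Qed.
Lemma eqm_eq N a b : a = b -> eqm N a b.
Proof. by move=> ->; apply: eqm_refl. Qed.
Lemma eqm_coef N a b n : eqm N a b -> (n < N)%N -> a`_n = b`_n.
Proof. by move=> [s ->] hn; rewrite coefD coefMXn hn addr0. Qed.

Lemma comp_exp a q k : (a ^+ k) \Po q = (a \Po q) ^+ k.
Proof.
elim: k => [|k IH]; first by rewrite !expr0 -polyC1 comp_polyC.
by rewrite !exprS comp_polyM IH.
Qed.

Lemma eqm_compl N a b t : eqm N a b -> eqm N (a \Po ('X * t)) (b \Po ('X * t)).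
Proof.
move=> [s ->]; exists ((s \Po ('X * t)) * t ^+ N).
by rewrite comp_polyD comp_polyM comp_Xn_poly exprMn; ring.
Qed.

Lemma eqm_compr N p q q' : eqm N q q' -> eqm N (p \Po q) (p \Po q').
Proof.
move=> h; rewrite !comp_polyE; apply: (big_ind2 (eqm N)).
- exact: eqm_refl.
- by move=> *; apply: eqmD.
- by move=> i _; apply: eqmZ; apply: eqmX.
Qed.


Lemma rep_mul N f g p q : rep N f p -> rep N g q -> rep N (fps_mul f g) (p * q).
Proof.
move=> hf hg n hn; rewrite coefM /fps_mul; apply: eq_bigr => [[j hj]] _ /=.
by rewrite hf ?hg //; lia.
Qed.

Lemma rep_one N : rep N (@fps_one K) 1.
Proof. by move=> n _; rewrite coef1 /fps_one; case: (n == 0%N). Qed.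

Lemma rep_exp N f p j : rep N f p -> rep N (fps_exp f j) (p ^+ j).
Proof.
move=> hf; elim: j => [|j IH]; first by rewrite expr0; apply: rep_one.
by rewrite exprS /fps_exp iterS; apply: rep_mul.
Qed.

Lemma rep_X N : rep N (@fps_X K) 'X.
Proof. by move=> n _; rewrite coefX /fps_X; case: (n == 1%N). Qed.

Lemma rep_1mX N : rep N (@fps_1mX K) (1 - 'X).
Proof.
move=> n _; rewrite coefB coef1 coefX /fps_1mX.
by case: n => [|[|n]] //=; rewrite ?subr0 ?sub0r ?subrr.
Qed.

Definition Gm N : {poly K} := \poly_(i < N) 1.

Lemma rep_geom N : rep N (fun n => - @fps_geom K n) (- Gm N).
Proof. by move=> n hn; rewrite coefN coef_poly hn. Qed.

Definition qq N : {poly K} := 'X * - Gm N.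

Lemma rep_g N : rep N (@fps_x_over_xm1 K) (qq N).
Proof. rewrite /fps_x_over_xm1 /qq; apply: rep_mul; [exact: rep_X | exact: rep_geom]. Qed.

Definition Cp N (r : int) : {poly K} :=
  match r with Posz k => (1 - 'X) ^+ k | Negz k => Gm N ^+ k.+1 end.
Definition Dp N (r : int) : {poly K} :=
  match r with Posz k => Gm N ^+ k | Negz k => (1 - 'X) ^+ k.+1 end.

Lemma rep_powz N r : rep N (@fps_powz K r) (Cp N r).
Proof.
rewrite /fps_powz /Cp; case: r => k; apply: rep_exp; [exact: rep_1mX|].
by move=> n hn; rewrite coef_poly hn.
Qed.

Lemma sum_narrow (F : nat -> K) m M : (m <= M)%N ->
  (forall i, (m <= i)%N -> (i < M)%N -> F i = 0) ->
  \sum_(i < M) F i = \sum_(i < m) F i.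
Proof.
move=> hmM hF; rewrite -!(big_mkord xpredT) (big_cat_nat (leq0n m) hmM) /=.
rewrite [X in _ + X]big1_seq ?addr0 // => i /andP [_].
by rewrite mem_index_iota => /andP [h1 h2]; apply: hF.
Qed.

Lemma coef_comp_X p t n :
  (p \Po ('X * t))`_n = \sum_(i < n.+1) p`_i * (('X * t) ^+ i)`_n.
Proof.
have hz : forall i, (n < i)%N -> (('X * t) ^+ i)`_n = 0.
  by move=> i hi; rewrite exprMn coefXnM hi.
rewrite coef_comp_poly; case: (leqP (size p) n.+1) => hs.
  rewrite [RHS](sum_narrow (F := fun i => p`_i * (('X * t) ^+ i)`_n) hs) // => i hi _.
  by rewrite nth_default ?mul0r.
rewrite (sum_narrow (F := fun i => p`_i * (('X * t) ^+ i)`_n) (ltnW hs)) // => i hi _.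
by rewrite hz ?mulr0.
Qed.

Lemma rep_comp N f g p t : rep N f p -> rep N g ('X * t) ->
  rep N (fps_comp f g) (p \Po ('X * t)).
Proof.
move=> hf hg n hn; rewrite coef_comp_X /fps_comp; apply: eq_bigr => [[j hj]] _ /=.
rewrite hf; last by lia.
by rewrite (rep_exp j hg).
Qed.

Variable r : int.
Definition Lf (phi : nat -> K) n :=
  fps_comp phi (@fps_x_over_xm1 K) n - fps_mul (fps_powz K r) phi n.

Lemma repL N phi p : rep N phi p -> forall n, (n < N)%N ->
  Lf phi n = (p \Po qq N - Cp N r * p)`_n.
Proof.
move=> hp n hn; rewrite /Lf coefB.
by rewrite (rep_comp hp (@rep_g N)) // (rep_mul (@rep_powz N r) hp).
Qed.


Lemma Gm_S N : Gm N.+1 = Gm N + 'X^N.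
Proof.
apply/polyP => i; rewrite coefD !coef_poly coefXn.
case: (ltngtP i N) => h.
- by rewrite ltnS (ltnW h) addr0.
- by rewrite ltnNge h add0r.
- by subst i; rewrite ltnS leqnn add0r.
Qed.

Lemma Gm_0 : Gm 0 = 0.
Proof. by apply/polyP => i; rewrite coef_poly coef0. Qed.

Lemma hGm N : (1 - 'X) * Gm N = 1 - 'X^N.
Proof.
elim: N => [|N IH]; first by rewrite Gm_0 expr0 mulr0 subrr.
rewrite Gm_S mulrDr IH exprS; ring.
Qed.

Lemma Gm_coef0 N : (0 < N)%N -> (Gm N)`_0 = 1.
Proof. by move=> h; rewrite coef_poly h. Qed.

Lemma coef0X a k : (a ^+ k)`_0 = (a`_0) ^+ k.
Proof. by rewrite -!horner_coef0 horner_exp. Qed.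

Lemma h_coef0 : (1 - 'X : {poly K})`_0 = 1.
Proof. by rewrite coefB coef1 coefX subr0. Qed.

Lemma Cp_coef0 N : (0 < N)%N -> (Cp N r)`_0 = 1.
Proof.
by move=> h; rewrite /Cp; case: r => k; rewrite coef0X ?h_coef0 ?Gm_coef0 // expr1n.
Qed.

Lemma Dp_coef0 N : (0 < N)%N -> (Dp N r)`_0 = 1.
Proof.
by move=> h; rewrite /Dp; case: r => k; rewrite coef0X ?h_coef0 ?Gm_coef0 // expr1n.
Qed.

Lemma coef_mon (d : K) n t : ((d *: 'X^n) \Po ('X * t))`_n = d * (t`_0) ^+ n.
Proof.
by rewrite comp_polyZ comp_Xn_poly exprMn coefZ coefXnM ltnn subnn coef0X.
Qed.

Lemma coef_mulmon c (d : K) n : (c * (d *: 'X^n))`_n = d * c`_0.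
Proof. by rewrite -scalerAr coefZ coefMXn ltnn subnn. Qed.

Lemma lemA phi phi' n : (forall k, (k < n)%N -> phi k = phi' k) ->
  Lf phi n - Lf phi' n = ((-1) ^+ n - 1) * (phi n - phi' n).
Proof.
move=> h.
pose p := \poly_(i < n.+1) phi i; pose p' := \poly_(i < n.+1) phi' i.
have hp : rep n.+1 phi p by move=> k hk; rewrite coef_poly hk.
have hp' : rep n.+1 phi' p' by move=> k hk; rewrite coef_poly hk.
rewrite (repL hp) // (repL hp') // -coefB.
have -> : p \Po qq n.+1 - Cp n.+1 r * p - (p' \Po qq n.+1 - Cp n.+1 r * p')
   = (p - p') \Po qq n.+1 - Cp n.+1 r * (p - p').
  by rewrite comp_polyB; ring.
have -> : p - p' = (phi n - phi' n) *: 'X^n.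
  apply/polyP => i; rewrite coefB coefZ coefXn !coef_poly.
  case: (ltngtP i n) => hi.
  - by rewrite ltnS (ltnW hi) h // subrr mulr0.
  - by rewrite ltnNge hi /= subrr mulr0.
  - by subst i; rewrite ltnS leqnn mulr1.
rewrite coefB coef_mon coef_mulmon Cp_coef0 // coefN Gm_coef0 //; ring.
Qed.


Lemma lemB phi n : (forall k, (k < n)%N -> Lf phi k = 0) -> ~~ odd n -> Lf phi n = 0.
Proof.
move=> hL hodd.
set N := n.+1.
pose p := \poly_(i < N) phi i.
have hp : rep N phi p by move=> k hk; rewrite coef_poly hk.
set q := qq N; set G := Gm N; set h : {poly K} := 1 - 'X.
set C := Cp N r; set D := Dp N r.
pose psi := p \Po q - C * p.
have hpsi : forall k, (k < N)%N -> Lf phi k = psi`_k by move=> k hk; rewrite (repL hp).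
have hqd : q = 'X * - G by [].
have ehG : eqm N (h * G) 1.
  by exists (-1); rewrite /h /G hGm; ring.
have eGh : eqm N (G * h) 1 by rewrite mulrC.
have s1 : eqm N (1 - q) G.
  exists 1; rewrite hqd; have := hGm N; rewrite -/G => e.
  have -> : 'X^N = 1 - (1 - 'X) * G by rewrite e; ring.
  ring.
have hq : h \Po q = 1 - q by rewrite comp_polyB -polyC1 comp_polyC comp_polyX.
have s2 : eqm N ((G \Po q) * G) 1.
  have e1 : eqm N ((G \Po q) * (1 - q)) 1.
    rewrite -hq -comp_polyM mulrC hGm comp_polyB -polyC1 comp_polyC comp_Xn_poly.
    exists (- (- G) ^+ N); rewrite hqd exprMn. ring.
  apply: eqm_trans e1; apply: eqmM; [exact: eqm_refl | exact: eqm_sym].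
have s3 : eqm N (G \Po q) h.
  apply: (@eqm_trans _ _ ((G \Po q) * (G * h))).
    by rewrite -[X in eqm _ X _]mulr1; apply: eqmM; [apply: eqm_refl| apply: eqm_sym].
  rewrite mulrA -[X in eqm _ _ X]mul1r; apply: eqmM => //; exact: eqm_refl.
have s4 : eqm N (q \Po q) 'X.
  have -> : q \Po q = q * - (G \Po q).
    by rewrite {1}hqd comp_polyM comp_polyX (raddfN (comp_poly q)).
  apply: (@eqm_trans _ _ (q * - h)).
    by apply: eqmM; [apply: eqm_refl | apply: eqmN].
  rewrite hqd -[X in eqm _ _ X]mulr1.
  have -> : 'X * - G * - h = 'X * (h * G) by ring.
  by apply: eqmM; [apply: eqm_refl|].
have s5 : eqm N ((p \Po q) \Po q) p.
  by rewrite -comp_polyA -[X in eqm _ _ X]comp_polyXr; apply: eqm_compr.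
have s6 : eqm N (C \Po q) D /\ eqm N (D * C) 1.
  rewrite /C /D /Cp /Dp; case: r => k; rewrite -/h -/G comp_exp -exprMn; split.
  - by apply: eqmX; rewrite hq.
  - by rewrite -(expr1n _ k); apply: eqmX.
  - by apply: eqmX.
  - by rewrite -(expr1n _ k.+1); apply: eqmX.
case: s6 => s6a s6b.
have s7 : eqm N (psi \Po q) (- (D * psi)).
  have e1 : eqm N (psi \Po q) (p - D * (p \Po q)).
    rewrite /psi comp_polyB comp_polyM; apply: eqmB => //.
    by apply: eqmM => //; apply: eqm_refl.
  apply: (eqm_trans e1); apply: eqm_sym.
  have -> : - (D * psi) = (D * C) * p - D * (p \Po q) by rewrite /psi; ring.
  apply: eqmB; last by apply: eqm_refl.
  by rewrite -[X in eqm _ _ X]mul1r; apply: eqmM => //; apply: eqm_refl.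
have hdec : psi = (psi`_n) *: 'X^n + drop_poly N psi * 'X^N.
  rewrite -{1}(poly_take_drop N psi); congr (_ + _).
  apply/polyP => i; rewrite coef_take_poly coefZ coefXn.
  case: (ltngtP i n) => hi.
  - by rewrite ltnS (ltnW hi) -hpsi ?hL // ?mulr0 //; apply: ltnW; rewrite ltnS.
  - by rewrite ltnNge hi mulr0.
  - by subst i; rewrite ltnS leqnn mulr1.
have c1 : (psi \Po q)`_n = psi`_n.
  rewrite {1}hdec comp_polyD comp_polyM comp_Xn_poly coefD hqd coef_mon.
  have -> : forall a t, (a * ('X * t) ^+ N)`_n = 0.
    by move=> a t; rewrite exprMn mulrCA mulrC coefMXn ltnSn.
  rewrite addr0 coefN Gm_coef0 //.
  by rewrite -signr_odd (negbTE hodd) expr0 mulr1.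
have c2 : (- (D * psi))`_n = - psi`_n.
  rewrite {1}hdec mulrDr mulrA coefN coefD coef_mulmon coefMXn ltnS leqnn addr0.
  by rewrite Dp_coef0 // mulr1.
have := eqm_coef s7 (ltnSn n); rewrite c1 c2 => e.
rewrite hpsi //; have : psi`_n *+ 2 == 0 by rewrite mulr2n {1}e addNr.
by rewrite mulrn_eq0 /= => /eqP.
Qed.


Lemma lemA' phi phi' n : (forall k, (k <= n)%N -> phi k = phi' k) ->
  Lf phi n = Lf phi' n.
Proof.
move=> h; apply/eqP; rewrite -subr_eq0; apply/eqP.
by rewrite lemA ?h ?subrr ?mulr0 // => k hk; apply: h; apply: ltnW.
Qed.

Variable ev : nat -> K.

Fixpoint F (m : nat) : nat -> K :=
  match m with
  | 0 => interleave ev (fun _ => 0)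
  | m'.+1 => let a := F m' in
      if odd m'.+1 then (fun k => if k == m'.+1 then a k + Lf a k / 2 else a k)
      else a
  end.

Lemma F1 m k : k != m.+1 -> F m.+1 k = F m k.
Proof. by move=> hk /=; case: ifP => // _; rewrite (negbTE hk). Qed.

Lemma F2 m k : (k <= m)%N -> F m k = F k k.
Proof.
elim: m => [|m IH] hk; first by move: hk; rewrite leqn0 => /eqP ->.
case: (eqVneq k m.+1) => [-> //|hne].
rewrite F1 // IH //; move: hk; by rewrite leq_eqVlt (negbTE hne) /= ltnS.
Qed.

Lemma F3 k : ~~ odd k -> forall m, F m k = F 0 k.
Proof.
move=> hk; elim=> [//|m IH] /=; case: ifP => // hm.
case: eqP => [e|_ //]; by move: hk; rewrite e /= hm.
Qed.

Lemma Lzero n : Lf (F n) n = 0.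
Proof.
elim: n {-2}n (leqnn n) => [|N IH] n hn.
  move: hn; rewrite leqn0 => /eqP ->; apply: lemB => // k; by rewrite ltn0.
case hod: (odd n).
  case: n hn hod => [//|m] hn hod.
  have e := @lemA (F m.+1) (F m) m.+1.
  have hb : forall k, (k < m.+1)%N -> F m.+1 k = F m k.
    by move=> k hk; rewrite F1 // neq_ltn hk.
  have hv : F m.+1 m.+1 = F m m.+1 + Lf (F m) m.+1 / 2.
    by cbn [F]; rewrite hod eqxx.
  move/(_ hb): e => /eqP; rewrite subr_eq => /eqP ->.
  rewrite -signr_odd hod expr1 hv.
  set x := Lf (F m) m.+1.
  have -> : F m m.+1 + x / 2 - F m m.+1 = x / 2 by ring.
  by rewrite {2}(splitr x); ring.
apply: lemB; last by rewrite hod.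
move=> k hk; rewrite (@lemA' _ (F k)); first by apply: IH; lia.
by move=> j hj; rewrite F2 ?(F2 (m:=k)) //; lia.
Qed.

Lemma uniq_sol phi1 phi2 :
  (forall k, ~~ odd k -> phi1 k = phi2 k) ->
  (forall n, Lf phi1 n = 0) -> (forall n, Lf phi2 n = 0) ->
  forall k, phi1 k = phi2 k.
Proof.
move=> he h1 h2 k; elim: k {-2}k (leqnn k) => [|N IH] k hk.
  by move: hk; rewrite leqn0 => /eqP ->; apply: he.
case hod: (odd k); last by apply: he; rewrite hod.
have hlt : forall j, (j < k)%N -> phi1 j = phi2 j by move=> j hj; apply: IH; lia.
move: (lemA hlt); rewrite h1 h2 subrr -signr_odd hod expr1 => e0.
have e : (phi1 k - phi2 k) *+ 2 == 0.
  apply/eqP; have -> : (phi1 k - phi2 k) *+ 2 = - ((-1 - 1) * (phi1 k - phi2 k)).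
    by rewrite mulr2n; ring.
  by rewrite -e0 oppr0.
by move: e; rewrite mulrn_eq0 /= subr_eq0 => /eqP.
Qed.

End Work.

From Stdlib Require Import FunctionalExtensionality.

Lemma inF_L (K : numFieldType) (r : int) (phi : nat -> K) :
  inF r phi <-> forall n, Lf r phi n = 0.
Proof.
split=> h n; first by rewrite /Lf h subrr.
by apply/eqP; rewrite -subr_eq0; apply/eqP; apply: h.
Qed.

Theorem corollary5p1 (K : numFieldType) (r : int) (ev : nat -> K) :
  exists! od : nat -> K, inF r (interleave ev od).
Proof.
pose od i := F r ev (i.*2.+1) (i.*2.+1).
have hint : forall k, interleave ev od k = F r ev k k.
  move=> k; rewrite /interleave; case: ifP => hk.
    have e : (k./2).*2.+1 = k by rewrite -[RHS]odd_double_half hk.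
    by rewrite /od e.
  by rewrite F3 ?hk //= /interleave hk.
have hodd : forall (o : nat -> K) i, interleave ev o (i.*2.+1) = o i.
  by move=> o i; rewrite /interleave /= odd_double /= ?uphalf_double.
have hsol : forall n, Lf r (interleave ev od) n = 0.
  move=> n; rewrite (@lemA' _ r _ (F r ev n)); first exact: Lzero.
  by move=> k hk; rewrite hint F2.
exists od; split; first exact: (proj2 (inF_L _ _)).
move=> od' /(proj1 (inF_L _ _)) h'; apply: functional_extensionality => i.
rewrite -(hodd od) -(hodd od'); apply: (uniq_sol _ hsol h').
by move=> k hk; rewrite /interleave (negbTE hk).
Qed.
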